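(* Let $m,n\in\mathbb{N}$, let $\lambda_{\ell}>0$ for $1\le\ell\le m$, and let $\phi_{j,\ell}\in(0,\pi/2)$ for $1\le j\le n$, $1\le\ell\le m$. Then the $n\times n$ matrix \[ \left(\frac{1}{\prod_{\ell=1}^{m}\sin^{\lambda_{\ell}}(\phi_{j,\ell}+\phi_{k,\ell})}\right)_{j,k=1}^{n} \] is positive semidefinite.
   Context: A real symmetric (or complex) matrix $A=(a_{j,k})$ is positive semidefinite if $\sum_{j,k}a_{j,k}z_j\overline{z_k}\ge0$ for all complex $z_j$. *)

(* Defs.v *)
From mathcomp Require Import all_boot all_order all_algebra.
From mathcomp Require Import all_classical all_reals all_analysis.
From mathcomp Require Import complex.
Set Implicit Arguments. Unset Strict Implicit. Unset Printing Implicit Defensive.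
Import Order.TTheory GRing.Theory Num.Theory.
Local Open Scope ring_scope.
Local Open Scope complex_scope.

(* A real n x n matrix A is positive semidefinite if
   sum_{j,k} a_{j,k} z_j conj(z_k) >= 0 for all complex z_j.
   In the partially ordered field R[i], (0 <= w) means w is real and >= 0. *)
Definition psd (R : realType) (n : nat) (A : 'M[R]_n) : Prop :=
  forall z : 'I_n -> R[i],
    0 <= \sum_(j < n) \sum_(k < n) (A j k)%:C * z j * (z k)^*.

(* Main.v *)
Require Import Defs.
From mathcomp Require Import all_boot all_order all_algebra.
From mathcomp Require Import all_classical all_reals all_analysis.
From mathcomp Require Import ring lra.
Import Order.TTheory GRing.Theory Num.Theory.
Import numFieldNormedType.Exports.
Local Open Scope classical_set_scope.
Local Open Scope ring_scope.
Set Implicit Arguments. Unset Strict Implicit. Unset Printing Implicit Defensive.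

Section Lim.
Variables (R : realType).

Lemma cvg_sumI (N : nat) (F : 'I_N -> nat -> R) (l : 'I_N -> R) :
  (forall i, F i n @[n --> \oo] --> l i) ->
  (\sum_(i < N) F i n) @[n --> \oo] --> \sum_(i < N) l i.
Proof.
elim: N F l => [|N IH] F l H.
  under eq_cvg do rewrite big_ord0. rewrite big_ord0; exact: cvg_cst.
under eq_cvg do rewrite big_ord_recr /=. rewrite big_ord_recr /=.
apply: cvgD; last exact: H.
by apply: (IH (fun i => F (widen_ord (leqnSn N) i))) => i; apply: H.
Qed.

Lemma ge0_lim (u : nat -> R) l : (forall N, 0 <= u N) -> u n @[n --> \oo] --> l -> 0 <= l.
Proof.
move=> u0 H; rewrite leNgt; apply/negP => l0.
have := cvgr_lt _ H _ l0; case=> N _ /(_ N (leqnn N)) /=.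
by rewrite ltNge u0.
Qed.
End Lim.
Section Gram.
Variables (R : realType) (n : nat).
Definition kern := 'I_n -> 'I_n -> R.
Definition qf (A : kern) (u : 'I_n -> R) :=
  \sum_(j < n) \sum_(k < n) A j k * u j * u k.
Definition rpsd (A : kern) := forall u, 0 <= qf A u.
Definition gram (A : kern) := exists (I : finType) (f : I -> 'I_n -> R),
  forall j k, A j k = \sum_(i : I) f i j * f i k.

Lemma gram_rpsd A : gram A -> rpsd A.
Proof.
move=> [I [f Hf]] u.
have -> : qf A u = \sum_(i : I) (\sum_(j < n) f i j * u j) * (\sum_(k < n) f i k * u k).
  rewrite /qf.
  under eq_bigr => j _ do under eq_bigr => k _ do rewrite Hf !mulr_suml.
  under eq_bigr => j _ do rewrite exchange_big.
  rewrite exchange_big; apply: eq_bigr => i _.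
  rewrite mulr_suml; apply: eq_bigr => j _.
  rewrite mulr_sumr; apply: eq_bigr => k _.
  by rewrite mulrACA !mulrA.
by apply: sumr_ge0 => i _; rewrite -expr2 sqr_ge0.
Qed.

Lemma gram_ext A B : gram A -> (forall j k, A j k = B j k) -> gram B.
Proof. by move=> [I [f Hf]] E; exists I, f => j k; rewrite -E. Qed.

Lemma gram_rank1 (f : 'I_n -> R) : gram (fun j k => f j * f k).
Proof. by exists 'I_1, (fun _ => f) => j k; rewrite big_ord1. Qed.

Lemma gram0 : gram (fun _ _ => 0).
Proof. by exists 'I_0, (fun _ _ => 0) => j k; rewrite big_ord0. Qed.

Lemma gram1 : gram (fun _ _ => 1).
Proof. apply: (gram_ext (gram_rank1 (fun _ => 1 : R))). by move=> j k; rewrite mulr1. Qed.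

Lemma gramD A B : gram A -> gram B -> gram (fun j k => A j k + B j k).
Proof.
move=> [I [f Hf]] [J [g Hg]].
exists (I + J)%type, (fun x => match x with inl a => f a | inr b => g b end).
by move=> j k; rewrite big_sumType Hf Hg.
Qed.

Lemma gramM A B : gram A -> gram B -> gram (fun j k => A j k * B j k).
Proof.
move=> [I [f Hf]] [J [g Hg]].
exists (I * J)%type, (fun x j => f x.1 j * g x.2 j).
move=> j k; rewrite Hf Hg mulr_suml; under eq_bigr do rewrite mulr_sumr.
by rewrite pair_big /=; apply: eq_bigr => -[a b] _ /=; rewrite mulrACA.
Qed.

Lemma gramZ c A : 0 <= c -> gram A -> gram (fun j k => c * A j k).
Proof.
move=> c0 [I [f Hf]].
exists I, (fun i j => Num.sqrt c * f i j) => j k.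
rewrite Hf mulr_sumr; apply: eq_bigr => i _.
by rewrite mulrACA -expr2 sqr_sqrtr.
Qed.

Lemma gram_sum N (F : 'I_N -> kern) : (forall i, gram (F i)) ->
  gram (fun j k => \sum_(i < N) F i j k).
Proof.
elim: N F => [|N IH] F HF.
  by apply: (gram_ext gram0) => j k; rewrite big_ord0.
apply: (gram_ext (gramD (IH (fun i => F (widen_ord (leqnSn N) i)) _) (HF ord_max))).
  by move=> i; apply: HF.
by move=> j k; rewrite big_ord_recr.
Qed.

Lemma gramX A i : gram A -> gram (fun j k => A j k ^+ i).
Proof.
move=> gA; elim: i => [|i IH].
  by apply: (gram_ext gram1) => j k; rewrite expr0.
by apply: (gram_ext (gramM gA IH)) => j k; rewrite exprS.
Qed.

End Gram.

Section Gram2.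
Variables (R : realType) (n : nat).

Lemma rpsd_lim (A : nat -> kern R n) (B : kern R n) : (forall N, rpsd (A N)) ->
  (forall j k, A N j k @[N --> \oo] --> B j k) -> rpsd B.
Proof.
move=> HA HB u; apply: (@ge0_lim _ (fun N => qf (A N) u)); first by move=> N; apply: HA.
rewrite /qf; apply: (cvg_sumI (F := fun j N => \sum_(k < n) A N j k * u j * u k)) => j.
apply: (cvg_sumI (F := fun k N => A N j k * u j * u k)) => k.
by apply: cvgM; [apply: cvgM => //; exact: cvg_cst | exact: cvg_cst].
Qed.

Lemma rpsd_scale (A : kern R n) c (d : 'I_n -> R) : 0 <= c -> rpsd A ->
  rpsd (fun j k => c * d j * d k * A j k).
Proof.
move=> c0 HA u; rewrite /qf.
have -> : \sum_(j < n) \sum_(k < n) c * d j * d k * A j k * u j * u k =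
   c * qf A (fun j => d j * u j).
  rewrite /qf mulr_sumr; apply: eq_bigr => j _; rewrite mulr_sumr.
  by apply: eq_bigr => k _; ring.
exact: mulr_ge0.
Qed.

End Gram2.

Section ExpGram.
Variables (R : realType) (n : nat).

Lemma rpsd_exp (G : kern R n) : gram G -> rpsd (fun j k => expR (G j k)).
Proof.
move=> gG.
apply: (@rpsd_lim _ _ (fun N j k => series (exp_coeff (G j k)) N)).
  move=> N; apply: gram_rpsd.
  apply: (gram_ext (@gram_sum _ _ N (fun i j k => (i`!%:R)^-1 * G j k ^+ i) _)).
    by move=> i; apply: gramZ; [rewrite invr_ge0 | exact: gramX].
  move=> j k; rewrite /series /= big_mkord; apply: eq_bigr => i _.
  by rewrite /exp_coeff /= mulrC.
move=> j k; exact: is_cvg_series_exp_coeff.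
Qed.

End ExpGram.
Section LnSeries.
Variable R : realType.

Definition lnF (N : nat) (t : R) :=
  ln (1 - t) + \sum_(i < N) (i.+1%:R)^-1 * t ^+ i.+1.

Lemma lnF_derive (N : nat) (t : R) : t < 1 -> is_derive t 1 (lnF N) (- t ^+ N / (1 - t)).
Proof.
move=> t1.
have d1 : is_derive t 1 (fun t : R => 1 - t) (-1).
  have := @is_deriveB R R^o R^o (cst 1) id t 1 0 1 (is_derive_cst _ _ _) (is_derive_id _ _).
  by rewrite sub0r.
have d2 : is_derive ((fun t : R => 1 - t) t) 1 (@ln R) (1 - t)^-1.
  by apply: is_derive1_ln; rewrite subr_gt0.
have d3 := @is_derive1_comp R (@ln R) (fun t : R => 1 - t) t _ _ d2 d1.
have d4 : is_derive t 1 (\sum_(i < N) (fun t : R => (i.+1%:R)^-1 * t ^+ i.+1))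
             (\sum_(i < N) t ^+ i).
  apply: is_derive_sum => i.
  have := @is_deriveX _ _ id i.+1 t 1 1 (is_derive_id _ _).
  move=> /(@is_deriveZ _ _ _ _ (i.+1%:R)^-1) H.
  have -> : (fun t0 : R => i.+1%:R^-1 * t0 ^+ i.+1) = (i.+1%:R^-1 \*: id ^+ i.+1).
    by apply/funext => x /=; rewrite exprfctE.
  apply: (is_derive_eq H).
  by rewrite scalerA mulrA mulVf ?pnatr_eq0 // mul1r; exact: mulr1.
have d5 := is_deriveD d3 d4.
have -> : lnF N = ((@ln R) \o (fun t : R => 1 - t)) + \sum_(i < N) (fun t : R => (i.+1%:R)^-1 * t ^+ i.+1).
  by apply/funext => x; rewrite /lnF fct_sumE.
apply: (is_derive_eq d5).
have t10 : 1 - t != 0 by rewrite subr_eq0 gt_eqF.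
apply: (mulIf t10); rewrite mulrDl mulrN1 mulNr mulVf // divfK //.
have := subrX1 t N => H.
have -> : (\sum_(i < N) t ^+ i) * (1 - t) = 1 - t ^+ N.
  by rewrite -opprB mulrN -mulrC -H opprB.
ring.
Qed.


Lemma lnF0 (N : nat) : lnF N 0 = 0.
Proof.
rewrite /lnF subr0 ln1 add0r big1 // => i _; by rewrite expr0n mulr0.
Qed.

Lemma dlnF_bound (N : nat) (w c : R) : `|w| < 1 -> `|c| <= `|w| ->
  `|- c ^+ N / (1 - c)| <= `|w| ^+ N / (1 - `|w|).
Proof.
move=> w1 cw.
have c1 : c < 1 by apply: (le_lt_trans (ler_norm c)); apply: (le_lt_trans cw).
have h1 : 0 < 1 - c by rewrite subr_gt0.
have h2 : 0 < 1 - `|w| by rewrite subr_gt0.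
rewrite normrM normrN normrX normfV (gtr0_norm h1).
apply: ler_pM.
- by rewrite exprn_ge0.
- by rewrite invr_ge0 ltW.
- by apply: lerXn2r => //; rewrite nnegrE.
rewrite lef_pV2 ?posrE //.
rewrite lerD2l lerN2; exact: (le_trans (ler_norm c) cw).
Qed.

Lemma lnF_bound (N : nat) (w : R) : `|w| < 1 ->
  `|lnF N w| <= `|w| ^+ N.+1 / (1 - `|w|).
Proof.
move=> w1.
have key : forall a b : R, a <= b -> b < 1 ->
    exists2 c, c \in `[a, b] & lnF N b - lnF N a = (- c ^+ N / (1 - c)) * (b - a).
  move=> a b ab b1.
  apply: MVT_segment => //.
    move=> x; rewrite in_itv /= => /andP[_ xb].
    by apply: lnF_derive; apply: (lt_trans xb).
  apply: derivable_within_continuous => x; rewrite in_itv /= => /andP[_ xb].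
  have := @lnF_derive N x (le_lt_trans xb b1).
  by case.
rewrite exprSr mulrAC.
case: (lerP 0 w) => w0.
  have [c] := key 0 w w0 (le_lt_trans (ler_norm w) w1).
  rewrite in_itv /= => /andP[c0 cw].
  rewrite lnF0 subr0 subr0 => ->.
  rewrite normrM ler_wpM2r //.
  apply: dlnF_bound => //.
  by rewrite (ger0_norm c0) (ger0_norm w0).
have [c] := key w 0 (ltW w0) ltr01.
rewrite in_itv /= => /andP[wc c0].
rewrite lnF0 sub0r add0r => /eqP; rewrite eqr_oppLR => /eqP ->.
rewrite normrN normrM normrN ler_wpM2r //.
apply: dlnF_bound => //.
by rewrite (ler0_norm c0) (ltr0_norm w0) lerN2.
Qed.


Lemma ln_series (w : R) : `|w| < 1 ->
  (\sum_(i < N) (i.+1%:R)^-1 * w ^+ i.+1) @[N --> \oo] --> - ln (1 - w).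
Proof.
move=> w1.
set b := fun N : nat => `|w| ^+ N.+1 / (1 - `|w|).
have b0 : b N @[N --> \oo] --> 0.
  have : (`|w| * `|w| ^+ N) * (1 - `|w|)^-1 @[N --> \oo] --> (`|w| * 0) * (1 - `|w|)^-1.
    apply: cvgM; last exact: cvg_cst.
    apply: cvgM; first exact: cvg_cst.
    by apply: cvg_expr; rewrite normr_id.
  rewrite mulr0 mul0r.
  have -> : b = (fun N => `|w| * `|w| ^+ N * (1 - `|w|)^-1) by apply/funext => N; rewrite /b exprS.
  by [].
have H0 : lnF N w @[N --> \oo] --> 0.
  apply: (@squeeze_cvgr _ _ _ _ (fun N => - b N) b).
  - by apply: filterE => N; rewrite -ler_norml; apply: lnF_bound.
  - by rewrite -oppr0; apply: cvgN.
  - exact: b0.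
have -> : (fun N => \sum_(i < N) (i.+1%:R)^-1 * w ^+ i.+1) = (fun N => lnF N w - ln (1 - w)).
  by apply/funext => N; rewrite /lnF addrC addKr.
rewrite -[X in _ --> X]sub0r; apply: cvgB => //; exact: cvg_cst.
Qed.

End LnSeries.
From mathcomp Require Import complex.
Section Cplx.
Variable R : realType.
Local Open Scope complex_scope.

Lemma sumC (I : finType) (f g : I -> R) :
  \sum_i (f i +i* g i) = (\sum_i f i) +i* (\sum_i g i).
Proof.
elim/big_rec3: _ => // i x y z _ ->.
by [].
Qed.

Lemma termE (a : R) (z w : R[i]) : a%:C * z * w^* =
  (a * (complex.Re z * complex.Re w + complex.Im z * complex.Im w)) +i* (a * (complex.Im z * complex.Re w - complex.Re z * complex.Im w)).
Proof.
case: z => x y; case: w => x' y' /=.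
rewrite [in LHS]/GRing.mul /=. congr (_ +i* _); ring.
Qed.

Lemma psd_of (n : nat) (A : 'M[R]_n) :
  (forall j k, A j k = A k j) ->
  (forall u : 'I_n -> R, 0 <= \sum_(j < n) \sum_(k < n) A j k * u j * u k) ->
  psd A.
Proof.
move=> sym H z.
set u := fun j => complex.Re (z j); set v := fun j => complex.Im (z j).
under eq_bigr => j _ do under eq_bigr => k _ do rewrite termE.
under eq_bigr => j _ do rewrite sumC.
rewrite sumC lecE /=.
apply/andP; split.
  rewrite eq_sym; apply/eqP.
  under eq_bigr => j _ do under eq_bigr => k _ do rewrite mulrBr.
  under eq_bigr => j _ do rewrite sumrB.
  rewrite sumrB; apply/eqP; rewrite eq_sym subr_eq0; apply/eqP.
  rewrite exchange_big; apply: eq_bigr => j _; apply: eq_bigr => k _.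
  by rewrite sym; ring.
have := H u; have := H v => Hv Hu.
have -> : \sum_(j < n) \sum_(k < n) A j k * (complex.Re (z j) * complex.Re (z k) + complex.Im (z j) * complex.Im (z k)) =
  \sum_(j < n) \sum_(k < n) A j k * u j * u k + \sum_(j < n) \sum_(k < n) A j k * v j * v k.
  rewrite -big_split; apply: eq_bigr => j _; rewrite -big_split; apply: eq_bigr => k _.
  rewrite /u /v /=; ring.
exact: addr_ge0.
Qed.
End Cplx.

Lemma rpsd_ext (R : realType) (n : nat) (A B : kern R n) : rpsd A ->
  (forall j k, A j k = B j k) -> rpsd B.
Proof.
move=> HA E u; have := HA u; rewrite /qf.
by under eq_bigr => j _ do under eq_bigr => k _ do rewrite E.
Qed.

Local Open Scope ring_scope.

Theorem mainTheorem5 (R : realType) (m n : nat) (lambda : 'I_m -> R)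
  (phi : 'I_n -> 'I_m -> R) :
  (forall l, 0 < lambda l) ->
  (forall j l, 0 < phi j l < pi / 2) ->
  psd (\matrix_(j < n, k < n)
         (\prod_(l < m) (sin (phi j l + phi k l)) `^ (lambda l))^-1).
Proof.
move=> hl hphi.
have cs0 : forall j l, 0 < cos (phi j l) /\ 0 < sin (phi j l).
  move=> j l; have /andP[h1 h2] := hphi j l; split.
    apply: cos_gt0_pihalf; rewrite h2 andbT.
    by apply: (lt_trans _ h1); rewrite oppr_lt0 divr_gt0 // pi_gt0.
  by apply: sin_gt0_pihalf; rewrite h1 h2.
pose A j l := cos (phi j l) + sin (phi j l).
pose p j l := (cos (phi j l) - sin (phi j l)) / A j l.
have A0 : forall j l, 0 < A j l.
  by move=> j l; have [h1 h2] := cs0 j l; rewrite /A addr_gt0.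
have p1 : forall j l, `|p j l| < 1.
  move=> j l; have [h1 h2] := cs0 j l.
  rewrite /p normrM normfV (gtr0_norm (A0 j l)) ltr_pdivrMr // mul1r /A ltr_norml.
  apply/andP; split; lra.
have pp1 : forall j k l, `|p j l * p k l| < 1.
  move=> j k l; rewrite normrM.
  have := p1 j l; have := p1 k l; have := normr_ge0 (p j l); have := normr_ge0 (p k l).
  move=> *; nra.
have sinE : forall j k l, sin (phi j l + phi k l) = A j l * A k l * ((1 - p j l * p k l) / 2).
  move=> j k l; have a1 := A0 j l; have a2 := A0 k l.
  rewrite sinD /p /A; rewrite /A in a1 a2.
  field; apply/andP; split; rewrite gt_eqF //.
pose D j := \prod_(l < m) (A j l `^ lambda l)^-1.
pose M j k := \sum_(l < m) lambda l * (ln 2 - ln (1 - p j l * p k l)).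
have entE : forall j k,
   (\prod_(l < m) (sin (phi j l + phi k l)) `^ (lambda l))^-1 = 1 * D j * D k * expR (M j k).
  move=> j k; rewrite mul1r /D /M expR_sum -!big_split /= -prodfV.
  apply: eq_bigr => l _.
  have pp0 : 0 < 1 - p j l * p k l.
    by rewrite subr_gt0; apply: (le_lt_trans (ler_norm _)); apply: pp1.
  have a1 := ltW (A0 j l); have a2 := ltW (A0 k l).
  have h2 : 0 <= (1 - p j l * p k l) / 2 by rewrite divr_ge0 // ltW.
  rewrite sinE (powRM _ (mulr_ge0 a1 a2) h2) (powRM _ a1 a2).
  have e3 : ((1 - p j l * p k l) / 2) `^ lambda l = expR (lambda l * ln ((1 - p j l * p k l) / 2)).
    by rewrite /powR gt_eqF // divr_gt0.
  rewrite !invfM e3 -expRN ln_div ?posrE //.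
  congr (_ * expR _); ring.
apply: psd_of.
  by move=> j k; rewrite !mxE; congr (_^-1); apply: eq_bigr => l _; rewrite addrC.
have Hexp : rpsd (fun j k => expR (M j k)).
  pose MN (N : nat) j k := \sum_(l < m) lambda l *
     (ln 2 + \sum_(i < N) (i.+1%:R)^-1 * (p j l * p k l) ^+ i.+1).
  apply: (@rpsd_lim _ _ (fun N j k => expR (MN N j k))).
    move=> N; apply: rpsd_exp.
    apply: (gram_sum (F := fun l j k => lambda l *
      (ln 2 + \sum_(i < N) (i.+1%:R)^-1 * (p j l * p k l) ^+ i.+1))) => l.
    apply: gramZ; first exact: ltW.
    apply: gramD.
      apply: (gram_ext (gramZ _ (gram1 R n))); last by move=> j k; rewrite mulr1.
      by apply: ln_ge0; rewrite ler1n.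
    apply: (gram_sum (F := fun i j k => (i.+1%:R)^-1 * (p j l * p k l) ^+ i.+1)) => i.
    apply: gramZ; first by rewrite invr_ge0.
    exact: (gramX _ (gram_rank1 (fun j => p j l))).
  move=> j k.
  apply: (@continuous_cvg _ _ _ _ _ (MN ^~ j ^~ k) expR (M j k)).
    exact: continuous_expR.
  apply: (cvg_sumI (F := fun l N => lambda l *
      (ln 2 + \sum_(i < N) (i.+1%:R)^-1 * (p j l * p k l) ^+ i.+1))) => l.
  apply: cvgM; first exact: cvg_cst.
  apply: cvgD; first exact: cvg_cst.
  exact: ln_series.
have := rpsd_scale D ler01 Hexp.
move=> H; apply: (rpsd_ext H) => j k; by rewrite mxE entE.
Qed.
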